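(* Let $d\ge3$ be an integer. The function $$q_d(\gamma)=\frac{1-\frac{F^*(d^2-1,\gamma)}{(d-1)^2}}{1-\gamma}$$ on the interval $-\frac1{d-1}\le\gamma<1$ attains its minimum at $\gamma=-\frac1{d-1}$.
   Context: For an integer $k\ge1$ and $\gamma\in[-1,1]$, $$F^*(k,\gamma)=\frac{2\gamma}{k}\left(\frac{\Gamma((k+1)/2)}{\Gamma(k/2)}\right)^2 {}_2F_1\!\left(\tfrac12,\tfrac12;\tfrac k2+1;\gamma^2\right),$$ where ${}_2F_1$ is the Gaussian hypergeometric function. *)

(* Defs.v *)
From Stdlib Require Import Reals Factorial.
From Coquelicot Require Import Coquelicot.
Open Scope R_scope.

Definition Gamma (x : R) : R :=
  RInt_gen (fun t => Rpower t (x - 1) * exp (- t)) (at_right 0) (Rbar_locally p_infty).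

Fixpoint poch (a : R) (n : nat) : R :=
  match n with
  | O => 1
  | S m => poch a m * (a + INR m)
  end.

Definition hyp2F1 (a b c z : R) : R :=
  Series (fun n => poch a n * poch b n / (poch c n * INR (fact n)) * z ^ n).

Definition Fstar (k : nat) (g : R) : R :=
  2 * g / INR k * (Gamma ((INR k + 1) / 2) / Gamma (INR k / 2)) ^ 2
  * hyp2F1 (1/2) (1/2) (INR k / 2 + 1) (g ^ 2).

Definition q (d : nat) (g : R) : R :=
  (1 - Fstar (d * d - 1)%nat g / (INR d - 1) ^ 2) / (1 - g).

(* Main.v *)
Require Import Defs.
From Stdlib Require Import Reals Lra Psatz Classical Factorial.
From Coquelicot Require Import Coquelicot.
Open Scope R_scope.

Lemma exp_le' x y : x <= y -> exp x <= exp y.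
Proof. intros [H|H]; [left; apply exp_increasing; auto| subst; lra]. Qed.

Lemma ln_bound t : 0 < t -> ln t <= 2 * sqrt t.
Proof.
  intros Ht. pose proof (sqrt_lt_R0 t Ht) as Hs.
  assert (E : ln t = 2 * ln (sqrt t)).
  { rewrite <- (sqrt_sqrt t) at 1 by lra. rewrite ln_mult by lra. ring. }
  rewrite E. pose proof (exp_ineq1_le (ln (sqrt t))). rewrite exp_ln in H by lra. lra.
Qed.

Lemma dom_bound s t : 1 <= s -> 0 < t ->
  Rpower t (s - 1) * exp (- t) <= exp (2 * (s-1)^2) * exp (- t / 2).
Proof.
  intros Hs Ht. unfold Rpower. rewrite <- !exp_plus. apply exp_le'.
  pose proof (ln_bound t Ht). pose proof (sqrt_lt_R0 t Ht).
  pose proof (sqrt_sqrt t (Rlt_le _ _ Ht)).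
  assert ((s-1) * ln t <= (s-1) * (2 * sqrt t)) by (apply Rmult_le_compat_l; lra).
  set (u := sqrt t) in *. 
  pose proof (pow2_ge_0 (u - 2*(s-1))).
  assert (-t = - (u*u)) by (rewrite H1; ring). rewrite H4. 
  assert (- (u*u) / 2 = - (u*u)/2) by ring. lra.
Qed.

Lemma fs_derive s t : 0 < t ->
  is_derive (fun t => Rpower t (s - 1) * exp (- t)) t
   ((s-1) * Rpower t (s-1-1) * exp (-t) - Rpower t (s-1) * exp (-t)).
Proof.
  intros Ht.
  assert (H1 : is_derive (fun t => Rpower t (s - 1)) t ((s-1) * Rpower t (s-1-1))).
  { apply is_derive_Reals. apply derivable_pt_lim_power. auto. }
  assert (H2 : is_derive (fun t => exp (- t)) t (- exp (-t))).
  { auto_derive; auto. ring. }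
  pose proof (is_derive_mult _ _ _ _ _ H1 H2 (fun a b => Rmult_comm a b)) as H3.
  simpl in H3. unfold plus, mult in H3; simpl in H3. 
  replace ((s-1) * Rpower t (s-1-1) * exp (-t) - Rpower t (s-1) * exp (-t)) with
    ((s - 1) * Rpower t (s - 1 - 1) * exp (- t) + Rpower t (s - 1) * - exp (- t)) by ring.
  exact H3.
Qed.

Lemma fs_cont s t : 0 < t -> continuous (fun t => Rpower t (s - 1) * exp (- t)) t.
Proof.
  intros Ht. apply (@ex_derive_continuous R_AbsRing R_NormedModule). eexists. apply fs_derive; auto.
Qed.

Lemma fs_nonneg s t : 0 <= Rpower t (s - 1) * exp (- t).
Proof. unfold Rpower. pose proof (exp_pos ((s-1) * ln t)); pose proof (exp_pos (-t)); nra. Qed.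
Lemma exRI (f : R -> R) a b : 0 < a -> 0 < b -> (forall t, 0 < t -> continuous f t) -> ex_RInt f a b.
Proof.
  intros Ha Hb Hc. apply (@ex_RInt_continuous R_CompleteNormedModule). intros z [Hz1 Hz2]. apply Hc.
  unfold Rmin in Hz1. destruct (Rle_dec a b); lra.
Qed.

Lemma ex_gen_pos (f : R -> R) (B : R) :
  (forall t, 0 < t -> continuous f t) -> (forall t, 0 < t -> 0 <= f t) ->
  (forall a b, 0 < a -> a <= b -> RInt f a b <= B) ->
  ex_RInt_gen f (at_right 0) (Rbar_locally p_infty).
Proof.
  intros Hc Hp HB.
  set (E := fun y => exists a b, 0 < a /\ a <= b /\ y = RInt f a b).
  destruct (completeness E) as [l [Hub Hlub]].
  { exists B. intros y (a & b & Ha & Hab & ->). apply HB; auto. }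
  { exists (RInt f 1 1). exists 1, 1. lra. }
  exists l. intros P [eps HP].
  assert (Hex : exists a0 b0, 0 < a0 /\ a0 <= b0 /\ l - eps < RInt f a0 b0).
  { apply NNPP. intros Hn.
    assert (l <= l - eps).
    { apply Hlub. intros y (a & b & Ha & Hab & ->).
      apply Rnot_lt_le. intros Hl. apply Hn. exists a, b. auto. }
    destruct eps; simpl in *; lra. }
  destruct Hex as (a0 & b0 & Ha0 & Hab0 & Hl).
  apply (Filter_prod _ _ _ (fun a => 0 < a < a0) (fun b => b0 < b)).
  - exists (mkposreal a0 Ha0). intros y Hy Hy0. split; auto.
    unfold ball in Hy; simpl in Hy; unfold AbsRing_ball, abs, minus, plus, opp in Hy; simpl in Hy.
    apply Rabs_def2 in Hy. lra.
  - exists b0. auto.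
  - intros a b [Ha Ha'] Hb. simpl.
    exists (RInt f a b). split.
    + apply (@RInt_correct R_CompleteNormedModule). apply exRI; auto; lra.
    + apply HP.
      assert (H1 : RInt f a b <= l).
      { apply Hub. exists a, b. repeat split; lra. }
      assert (H2 : RInt f a0 b0 <= RInt f a b).
      { rewrite <- (RInt_Chasles f a a0 b) by (apply exRI; auto; lra).
        rewrite <- (RInt_Chasles f a0 b0 b) by (apply exRI; auto; lra).
        assert (0 <= RInt f a a0).
        { apply RInt_ge_0. lra. apply exRI; auto. intros; apply Hp; lra. }
        assert (0 <= RInt f b0 b).
        { apply RInt_ge_0. lra. apply exRI; auto; lra. intros; apply Hp; lra. }
        unfold plus; simpl. lra. }
      unfold ball; simpl; unfold AbsRing_ball, abs, minus, plus, opp; simpl.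
      apply Rabs_def1; destruct eps; simpl in *; lra.
Qed.

Lemma RInt_fs_bound s a b : 1 <= s -> 0 < a -> a <= b ->
  RInt (fun t => Rpower t (s - 1) * exp (- t)) a b <= 2 * exp (2 * (s-1)^2).
Proof.
  intros Hs Ha Hab. set (M := exp (2 * (s-1)^2)).
  assert (HI : is_RInt (fun t => M * exp (- t / 2)) a b
     (minus (- 2 * M * exp (- b / 2)) (- 2 * M * exp (- a / 2)))).
  { apply (@is_RInt_derive R_CompleteNormedModule (fun t => - 2 * M * exp (- t / 2))).
    - intros x _.
      assert (H : is_derive (fun t => - 2 * M * exp (- t / 2)) x (M * exp (- x / 2))).
      { auto_derive; auto. unfold Rdiv. field. }
      exact H.
    - intros x _. apply (@ex_derive_continuous R_AbsRing R_NormedModule).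
      auto_derive; auto. }
  apply Rle_trans with (RInt (fun t => M * exp (- t / 2)) a b).
  - apply RInt_le; auto.
    + apply exRI; auto; try lra. intros; apply fs_cont; auto.
    + eexists; exact HI.
    + intros x Hx. apply dom_bound; lra.
  - rewrite (is_RInt_unique _ _ _ _ HI). unfold minus, plus, opp; simpl.
    pose proof (exp_pos (- b / 2)). pose proof (exp_pos (-a/2)).
    assert (exp (-a/2) <= 1). { rewrite <- exp_0. apply exp_le'. lra. }
    assert (0 < M) by apply exp_pos. nra.
Qed.

Lemma G_ex s : 1 <= s ->
  ex_RInt_gen (fun t => Rpower t (s - 1) * exp (- t)) (at_right 0) (Rbar_locally p_infty).
Proof.
  intros Hs. apply ex_gen_pos with (2 * exp (2 * (s-1)^2)).
  - intros; apply fs_cont; auto.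
  - intros; apply fs_nonneg.
  - intros; apply RInt_fs_bound; auto.
Qed.

Definition fs (s : R) := fun t => Rpower t (s - 1) * exp (- t).

Lemma fs_small s t : 1 <= s -> 0 < t < 1 -> fs (s+1) t <= t.
Proof.
  intros Hs [H0 H1]. unfold fs, Rpower.
  replace (s + 1 - 1) with s by ring.
  assert (ln t < 0) by (rewrite <- ln_1; apply ln_increasing; lra).
  assert (exp (s * ln t) <= t).
  { rewrite <- (exp_ln t) at 2 by lra. apply exp_le'. nra. }
  assert (exp (- t) <= 1) by (rewrite <- exp_0; apply exp_le'; lra).
  pose proof (exp_pos (s * ln t)). nra.
Qed.

Lemma lim0 s : 1 <= s -> filterlim (fs (s+1)) (at_right 0) (locally 0).
Proof.
  intros Hs. apply filterlim_locally. intros eps.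
  assert (Hd : 0 < Rmin eps 1) by (apply Rmin_pos; [apply cond_pos| lra]).
  exists (mkposreal _ Hd). intros y Hy Hy0.
  unfold ball in Hy; simpl in Hy; unfold AbsRing_ball, abs, minus, plus, opp in Hy; simpl in Hy.
  apply Rabs_def2 in Hy. 
  pose proof (Rmin_l eps 1). pose proof (Rmin_r eps 1).
  pose proof (fs_small s y Hs ltac:(lra)).
  pose proof (fs_nonneg (s+1) y).
  unfold ball; simpl; unfold AbsRing_ball, abs, minus, plus, opp; simpl.
  unfold fs in *. apply Rabs_def1; lra.
Qed.

Lemma liminf s : 1 <= s -> filterlim (fs (s+1)) (Rbar_locally p_infty) (locally 0).
Proof.
  intros Hs. apply filterlim_locally. intros eps.
  set (M := exp (2 * (s + 1 - 1)^2)).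
  assert (HM : 0 < M) by apply exp_pos.
  exists (Rmax 0 (- 2 * ln (eps / M))). intros y Hy.
  pose proof (Rmax_l 0 (- 2 * ln (eps / M))). pose proof (Rmax_r 0 (- 2 * ln (eps / M))).
  assert (Hy0 : 0 < y) by lra.
  pose proof (dom_bound (s+1) y ltac:(lra) Hy0) as Hd. fold M in Hd.
  assert (He : exp (- y / 2) < eps / M).
  { rewrite <- (exp_ln (eps / M)). apply exp_increasing. lra.
    apply Rdiv_lt_0_compat; [apply cond_pos| auto]. }
  assert (M * exp (- y / 2) < eps).
  { apply Rmult_lt_compat_l with (r := M) in He; auto.
    replace (M * (eps / M)) with (pos eps) in He by (field; lra). lra. }
  pose proof (fs_nonneg (s+1) y).
  unfold ball; simpl; unfold AbsRing_ball, abs, minus, plus, opp; simpl.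
  unfold fs in *. apply Rabs_def1; lra.
Qed.

Definition FA := at_right 0.
Definition FB := Rbar_locally p_infty.

Lemma pos_prod : filter_prod FA FB (fun ab => 0 < fst ab /\ 0 < snd ab).
Proof.
  apply (Filter_prod _ _ _ (fun a => 0 < a) (fun b => 0 < b)).
  - exists (mkposreal 1 Rlt_0_1). intros; auto.
  - exists 0. auto.
  - simpl; auto.
Qed.

Lemma Gfun_eq s t : 0 < t -> Derive (fs (s+1)) t = s * fs s t - fs (s+1) t.
Proof.
  intros Ht. apply is_derive_unique. unfold fs.
  pose proof (fs_derive (s+1) t Ht) as H.
  replace (s + 1 - 1 - 1) with (s - 1) in H by ring.
  replace (s * (Rpower t (s - 1) * exp (- t)) - Rpower t (s + 1 - 1) * exp (- t)) with
    ((s + 1 - 1) * Rpower t (s - 1) * exp (- t) - Rpower t (s + 1 - 1) * exp (- t)) by ring.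
  exact H.
Qed.

Lemma Gfun_cont s t : 0 < t -> continuous (fun t => s * fs s t - fs (s+1) t) t.
Proof.
  intros Ht. apply (@ex_derive_continuous R_AbsRing R_NormedModule).
  apply (@ex_derive_minus R_AbsRing R_NormedModule (fun t => s * fs s t) (fs (s+1))).
  - apply ex_derive_scal. eexists. apply fs_derive; auto.
  - eexists. apply fs_derive; auto.
Qed.

Lemma Gamma_is s : 1 <= s -> is_RInt_gen (fs s) FA FB (RInt_gen (fs s) FA FB).
Proof.
  intros Hs. apply (@RInt_gen_correct R_CompleteNormedModule).
  apply Proper_StrongProper, at_right_proper_filter.
  apply Proper_StrongProper, Rbar_locally_filter. apply G_ex; auto.
Qed.

Lemma Gamma_rec s : 1 <= s -> RInt_gen (fs (s+1)) FA FB = s * RInt_gen (fs s) FA FB.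
Proof.
  intros Hs.
  assert (HD : is_RInt_gen (Derive (fs (s+1))) FA FB (0 - 0)).
  { apply is_RInt_gen_Derive.
    - eapply filter_imp; [| exact pos_prod]. intros [a b] [Ha Hb] x Hx. simpl in *.
      eexists. apply fs_derive. unfold Rmin in Hx; destruct (Rle_dec a b); lra.
    - eapply filter_imp; [| exact pos_prod]. intros [a b] [Ha Hb] x Hx. simpl in *.
      assert (Hx0 : 0 < x) by (unfold Rmin in Hx; destruct (Rle_dec a b); lra).
      apply continuous_ext_loc with (g := fun t => s * fs s t - fs (s+1) t).
      + exists (mkposreal x Hx0). intros y Hy.
        unfold ball in Hy; simpl in Hy; unfold AbsRing_ball, abs, minus, plus, opp in Hy; simpl in Hy.
        apply Rabs_def2 in Hy. rewrite Gfun_eq; auto; lra.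
      + apply Gfun_cont; auto.
    - apply lim0; auto.
    - apply liminf; auto. }
  assert (HG : is_RInt_gen (fun t => s * fs s t - fs (s+1) t) FA FB (0 - 0)).
  { eapply is_RInt_gen_ext; [| exact HD].
    eapply filter_imp; [| exact pos_prod]. intros [a b] [Ha Hb] x Hx. simpl in *.
    apply Gfun_eq. unfold Rmin in Hx; destruct (Rle_dec a b); lra. }
  assert (HG2 := is_RInt_gen_minus _ _ _ _ (is_RInt_gen_scal _ s _ (Gamma_is s Hs))
            (Gamma_is (s+1) ltac:(lra))).
  apply (@is_RInt_gen_unique R_CompleteNormedModule) in HG;
    [| apply Proper_StrongProper, at_right_proper_filter | apply Proper_StrongProper, Rbar_locally_filter].
  apply (@is_RInt_gen_unique R_CompleteNormedModule) in HG2;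
    [| apply Proper_StrongProper, at_right_proper_filter | apply Proper_StrongProper, Rbar_locally_filter].
  unfold minus, plus, opp, scal in HG2; simpl in HG2; unfold mult in HG2; simpl in HG2.
  change (RInt_gen (fun t => s * fs s t - fs (s+1) t) FA FB = 0 - 0) in HG.
  assert (E : RInt_gen (fun t => s * fs s t - fs (s+1) t) FA FB =
    RInt_gen (fun y => s * fs s y + - fs (s + 1) y) FA FB) by reflexivity.
  rewrite E, HG2 in HG. lra.
Qed.

Lemma quad s L : 1 <= s ->
  0 <= L^2 * RInt_gen (fs s) FA FB - 2 * L * RInt_gen (fs (s + /2)) FA FB + RInt_gen (fs (s+1)) FA FB.
Proof.
  intros Hs. assert (Hs2 : 1 <= s + /2) by lra. assert (Hs1 : 1 <= s + 1) by lra.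
  pose proof (is_RInt_gen_plus _ _ _ _ (is_RInt_gen_plus _ _ _ _
     (is_RInt_gen_scal _ (L^2) _ (Gamma_is s Hs))
     (is_RInt_gen_scal _ (-2 * L) _ (Gamma_is (s + /2) Hs2)))
     (Gamma_is (s+1) Hs1)) as H.
  set (h := fun y => plus (plus (scal (L^2) (fs s y)) (scal (-2 * L) (fs (s + /2) y))) (fs (s+1) y)) in H.
  assert (Hn : norm (plus (plus (scal (L ^ 2) (RInt_gen (fs s) FA FB))
            (scal (-2 * L) (RInt_gen (fs (s + / 2)) FA FB))) (RInt_gen (fs (s + 1)) FA FB))
     <= plus (plus (scal (L ^ 2) (RInt_gen (fs s) FA FB))
            (scal (-2 * L) (RInt_gen (fs (s + / 2)) FA FB))) (RInt_gen (fs (s + 1)) FA FB)).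
  { apply (@RInt_gen_norm R_CompleteNormedModule FA FB (at_right_proper_filter 0) (Rbar_locally_filter p_infty) h h); auto.
    - apply (Filter_prod _ _ _ (fun a => a < 1) (fun b => 1 < b)).
      + exists (mkposreal 1 Rlt_0_1). intros y Hy _.
        unfold ball in Hy; simpl in Hy; unfold AbsRing_ball, abs, minus, plus, opp in Hy; simpl in Hy.
        apply Rabs_def2 in Hy. lra.
      + exists 1. auto.
      + simpl; intros; lra.
    - apply filter_forall. intros ab x _.
      assert (0 <= h x).
      { unfold h, fs, plus, scal; simpl; unfold mult; simpl.
        replace (s + /2 - 1) with ((s - 1) + /2) by field.
        replace (s + 1 - 1) with (((s - 1) + /2) + /2) by field.
        rewrite !Rpower_plus.
        set (P := Rpower x (s-1)). set (y := Rpower x (/2)).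
        assert (0 < P) by apply exp_pos. assert (0 < exp (-x)) by apply exp_pos.
        assert (0 <= P * exp (-x) * (L - y)^2).
        { apply Rmult_le_pos. nra. apply pow2_ge_0. }
        nra. }
      unfold norm; simpl; unfold abs; simpl. rewrite Rabs_pos_eq; lra. }
  unfold norm, plus, scal in Hn; simpl in Hn; unfold abs, mult in Hn; simpl in Hn.
  replace (L * (L * 1)) with (L^2) in Hn by ring.
  pose proof (Rabs_pos (L ^ 2 * RInt_gen (fs s) FA FB + -2 * L * RInt_gen (fs (s + / 2)) FA FB +
       RInt_gen (fs (s + 1)) FA FB)).
  lra.
Qed.

Lemma Gamma_ratio s : 1 <= s ->
  (RInt_gen (fs (s + /2)) FA FB / RInt_gen (fs s) FA FB)^2 <= s.
Proof.
  intros Hs.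
  set (A := RInt_gen (fs s) FA FB). set (B := RInt_gen (fs (s + /2)) FA FB).
  pose proof (quad s 0 Hs) as H0. rewrite (Gamma_rec s Hs) in H0. fold A B in H0.
  destruct (Req_dec A 0) as [HA|HA].
  - rewrite HA. unfold Rdiv. rewrite Rinv_0. lra.
  - assert (HA' : 0 < A) by (destruct (Rtotal_order A 0) as [h|[h|h]]; try lra; nra).
    pose proof (quad s (B / A) Hs) as H1. rewrite (Gamma_rec s Hs) in H1. fold A B in H1.
    replace ((B / A) ^ 2 * A - 2 * (B / A) * B + s * A) with (A * (s - (B/A)^2)) in H1 by (field; auto).
    nra.
Qed.


Lemma sumn_le (u v : nat -> R) N : (forall n, u n <= v n) -> sum_n u N <= sum_n v N.
Proof.
  intros H. induction N. rewrite !sum_O; auto.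
  rewrite !sum_Sn. unfold plus; simpl. specialize (H (S N)). lra.
Qed.

Lemma Series_le_B (u : nat -> R) B : ex_series u -> (forall N, sum_n u N <= B) -> Series u <= B.
Proof.
  intros He HB. pose proof (Series_correct u He) as Hs.
  assert (Hl : is_lim_seq (sum_n u) (Series u)) by exact Hs.
  pose proof (is_lim_seq_le _ _ _ _ HB Hl (is_lim_seq_const B)). simpl in H. auto.
Qed.

Lemma Series_ge0 (u : nat -> R) : ex_series u -> (forall n, 0 <= u n) -> 0 <= Series u.
Proof.
  intros He Hp. pose proof (Series_correct u He) as Hs.
  assert (Hl : is_lim_seq (sum_n u) (Series u)) by exact Hs.
  assert (forall N, 0 <= sum_n u N).
  { intros N. replace 0 with (sum_n (fun _ => 0) N). apply sumn_le; auto.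
    induction N. rewrite sum_O; auto. rewrite sum_Sn, IHN. unfold plus; simpl; ring. }
  pose proof (is_lim_seq_le _ _ _ _ H (is_lim_seq_const 0) Hl). simpl in H0. auto.
Qed.

Section Coef.
Variable c0 : R.
Hypothesis Hc0 : 3 <= c0.

Definition a (n : nat) := poch (1/2) n * poch (1/2) n / (poch c0 n * INR (fact n)).

Lemma poch_pos x n : 0 < x -> 0 < poch x n.
Proof.
  intros Hx. induction n; simpl. lra. pose proof (pos_INR n). nra.
Qed.

Lemma a_S n : a (S n) = a n * ((1/2 + INR n)^2 / ((c0 + INR n) * (INR n + 1))).
Proof.
  unfold a. simpl poch. rewrite fact_simpl, mult_INR, S_INR.
  pose proof (poch_pos c0 n ltac:(lra)). pose proof (pos_INR n).
  pose proof (INR_fact_lt_0 n). field. repeat split; lra.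
Qed.

Lemma a_pos n : 0 <= a n.
Proof.
  unfold a. pose proof (poch_pos (1/2) n ltac:(lra)). pose proof (poch_pos c0 n ltac:(lra)).
  pose proof (INR_fact_lt_0 n).
  apply Rmult_le_pos. nra. left. apply Rinv_0_lt_compat. nra.
Qed.

Lemma a_bound n : a n <= 2 / ((INR n + 1) * (INR n + 2)).
Proof.
  induction n.
  - unfold a; simpl. lra.
  - rewrite a_S, S_INR. pose proof (pos_INR n) as Hn. pose proof (a_pos n).
    set (m := INR n) in *.
    assert (R1 : (1/2 + m)^2 / ((c0 + m) * (m + 1)) <= (m + 1) / (m + 3)).
    { apply Rmult_le_reg_r with ((c0 + m) * (m + 1) * (m + 3)). nra.
      field_simplify; try lra. 
      assert ((1/2 + m)^2 * (m+3) <= (m+1)^2 * (c0 + m)) by nra. nra. }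
    assert (R2 : 0 <= (1/2 + m)^2 / ((c0 + m) * (m + 1))).
    { apply Rmult_le_pos. nra. left; apply Rinv_0_lt_compat; nra. }
    apply Rle_trans with (2 / ((m + 1) * (m + 2)) * ((m + 1) / (m + 3))).
    + apply Rmult_le_compat; auto.
    + apply Req_le. field. lra.
Qed.

Lemma a_le1 n : a n <= 1.
Proof.
  eapply Rle_trans. apply a_bound. pose proof (pos_INR n).
  apply Rmult_le_reg_r with ((INR n + 1) * (INR n + 2)). nra.
  field_simplify; nra.
Qed.

Definition H z := Series (fun n => a n * z ^ n).

Lemma ex_H z : Rabs z < 1 -> ex_series (fun n => a n * z ^ n).
Proof.
  intros Hz. apply (@ex_series_le R_AbsRing R_CompleteNormedModule) with (fun n => Rabs z ^ n).
  - intros n. unfold norm; simpl; unfold abs; simpl.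
    rewrite Rabs_mult, RPow_abs. rewrite (Rabs_pos_eq (a n)) by apply a_pos.
    pose proof (a_le1 n). pose proof (Rabs_pos (z^n)). nra.
  - apply ex_series_geom. rewrite Rabs_Rabsolu. auto.
Qed.

Lemma sum_b N : sum_n (fun n => 2 / ((INR n + 1) * (INR n + 2))) N = 2 - 2 / (INR N + 2).
Proof.
  induction N.
  - rewrite sum_O. simpl. field.
  - rewrite sum_Sn, IHN. unfold plus; simpl (plus _ _). rewrite S_INR. pose proof (pos_INR N). change (2 - 2 / (INR N + 2) + 2 / ((INR N + 1 + 1) * (INR N + 1 + 2)) = 2 - 2 / (INR N + 1 + 2)). field. lra.
Qed.

Lemma H_bounds z : 0 <= z < 1 -> 0 <= H z <= 2.
Proof.
  intros Hz. assert (Hz' : Rabs z < 1) by (rewrite Rabs_pos_eq; lra).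
  split.
  - apply Series_ge0. apply ex_H; auto. intros n. apply Rmult_le_pos. apply a_pos. apply pow_le; lra.
  - apply Series_le_B. apply ex_H; auto. intros N.
    eapply Rle_trans. apply sumn_le with (v := fun n => 2 / ((INR n + 1) * (INR n + 2))).
    + intros n. pose proof (a_bound n). pose proof (a_pos n).
      assert (z ^ n <= 1) by (rewrite <- (pow1 n); apply pow_incr; lra). pose proof (pow_le z n ltac:(lra)).
      nra.
    + rewrite sum_b. pose proof (pos_INR N).
      assert (0 < 2 / (INR N + 2)) by (apply Rdiv_lt_0_compat; lra). lra.
Qed.


Lemma pow_lip h x y m : Rabs x <= h -> Rabs y <= h -> y <= x ->
  Rabs (x^(S m) - y^(S m)) <= INR (S m) * h^m * (x - y).
Proof.
  intros Hx Hy Hxy. induction m.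
  - simpl. rewrite Rabs_pos_eq; lra.
  - replace (x ^ S (S m) - y ^ S (S m)) with (x * (x^(S m) - y^(S m)) + y^(S m) * (x - y))
      by (simpl; ring).
    eapply Rle_trans. apply Rabs_triang. rewrite !Rabs_mult.
    assert (Hh : 0 <= h) by (pose proof (Rabs_pos x); lra).
    assert (Rabs (y ^ S m) <= h ^ S m) by (rewrite <- RPow_abs; apply pow_incr; split; [apply Rabs_pos|auto]).
    rewrite (Rabs_pos_eq (x - y)) by lra.
    pose proof (Rabs_pos x). pose proof (Rabs_pos (x ^ S m - y ^ S m)).
    assert (Rabs x * Rabs (x ^ S m - y ^ S m) <= h * (INR (S m) * h ^ m * (x - y))).
    { apply Rmult_le_compat; auto. }
    rewrite (S_INR (S m)).
    assert (E : h ^ S m = h * h^m) by reflexivity. rewrite E in H0 |- *.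
    assert (Rabs (y ^ S m) * (x - y) <= h * h ^ m * (x - y)) by (apply Rmult_le_compat_r; lra).
    assert (h * (INR (S m) * h ^ m * (x - y)) = INR (S m) * (h * h ^ m) * (x - y)) by ring.
    lra.
Qed.

Lemma sum_c N : sum_n (fun n => (2 * INR n + 1) * (1/4)^n) N = 20/9 - (24 * INR N + 44) / 9 * (1/4)^(S N).
Proof.
  induction N.
  - rewrite sum_O. simpl. field.
  - rewrite sum_Sn, IHN. unfold plus; simpl (plus _ _). rewrite S_INR.
    change (20 / 9 - (24 * INR N + 44) / 9 * (1 / 4) ^ S N + (2 * (INR N + 1) + 1) * (1 / 4) ^ S N =
      20 / 9 - (24 * (INR N + 1) + 44) / 9 * (1 / 4) ^ S (S N)).
    simpl pow. field.
Qed.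

Lemma f_lip x y : Rabs x <= 1/2 -> Rabs y <= 1/2 -> y <= x ->
  x * H (x^2) - y * H (y^2) <= 20/9 * (x - y).
Proof.
  intros Hx Hy Hxy.
  assert (Ex : ex_series (fun n => x * (a n * (x^2)^n))).
  { apply (@ex_series_scal_l R_AbsRing R_CompleteNormedModule x (fun n => a n * (x^2)^n)).
    apply ex_H. rewrite <- RPow_abs. assert (Rabs x ^ 2 <= (1/2)^2) by (apply pow_incr; split; [apply Rabs_pos|auto]). lra. }
  assert (Ey : ex_series (fun n => y * (a n * (y^2)^n))).
  { apply (@ex_series_scal_l R_AbsRing R_CompleteNormedModule y (fun n => a n * (y^2)^n)).
    apply ex_H. rewrite <- RPow_abs. assert (Rabs y ^ 2 <= (1/2)^2) by (apply pow_incr; split; [apply Rabs_pos|auto]). lra. }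
  unfold H. rewrite <- !Series_scal_l. rewrite <- Series_minus by auto.
  apply Series_le_B.
  - apply (@ex_series_minus R_AbsRing R_CompleteNormedModule _ _ Ex Ey).
  - intros N. eapply Rle_trans.
    apply sumn_le with (v := fun n => (x - y) * ((2 * INR n + 1) * (1/4)^n)).
    + intros n. rewrite <- !pow_mult.
      replace (x * (a n * x ^ (2 * n)) - y * (a n * y ^ (2 * n))) with
        (a n * (x ^ S (2 * n) - y ^ S (2 * n))) by (simpl; ring).
      pose proof (pow_lip (1/2) x y (2 * n) Hx Hy Hxy).
      pose proof (a_pos n). pose proof (a_le1 n).
      pose proof (Rle_abs (x ^ S (2 * n) - y ^ S (2 * n))).
      pose proof (Rabs_pos (x ^ S (2 * n) - y ^ S (2 * n))).
      rewrite S_INR, mult_INR in H0. rewrite pow_mult in H0.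
      replace ((1/2)^2) with (1/4) in H0 by field. simpl (INR 2) in H0.
      assert (a n * (x ^ S (2 * n) - y ^ S (2 * n)) <= Rabs (x ^ S (2 * n) - y ^ S (2 * n))) by nra.
      nra.
    + assert (E : forall N, sum_n (fun n => (x - y) * ((2 * INR n + 1) * (1/4)^n)) N =
          (x - y) * sum_n (fun n => (2 * INR n + 1) * (1/4)^n) N).
      { induction N0. rewrite !sum_O; auto. rewrite !sum_Sn, IHN0. unfold plus; simpl. ring. }
      rewrite E, sum_c. pose proof (pos_INR N).
      assert (0 <= (24 * INR N + 44) / 9 * (1 / 4) ^ S N).
      { apply Rmult_le_pos. apply Rmult_le_pos; lra. apply pow_le; lra. }
      nra.
Qed.

End Coef.


Lemma div_le a b c d : 0 < b -> 0 < d -> a * d <= c * b -> a / b <= c / d.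
Proof.
  intros Hb Hd H.
  replace (a / b) with (a * d * / (b * d)) by (field; lra).
  replace (c / d) with (c * b * / (b * d)) by (field; lra).
  apply Rmult_le_compat_r; auto. left; apply Rinv_0_lt_compat; nra.
Qed.

Lemma final_ineq c t g fg ft : 0 <= c <= 1 -> 0 < t <= 1/2 -> -t <= g < 1 ->
  0 <= ft <= 2 * t -> (1/2 <= g -> fg <= 2) -> (g <= 1/2 -> fg + ft <= 20/9 * (g + t)) ->
  (1 - c * t^2 * (- ft)) / (1 - - t) <= (1 - c * t^2 * fg) / (1 - g).
Proof.
  intros Hc Ht Hg Hft H2 H1. apply div_le; try lra.
  set (C := c * t^2).
  assert (HC0 : 0 <= C) by (unfold C; nra).
  assert (HC1 : C <= t^2) by (unfold C; nra).
  assert (Hk : C * (fg * (1 + t) + ft * (1 - g)) <= g + t).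
  { destruct (Rle_dec g (1/2)) as [Hl|Hl].
    - specialize (H1 Hl).
      assert (P : fg * (1 + t) + ft * (1 - g) <= (1 + t) * (20/9) * (g + t)).
      { assert (fg * (1+t) <= (-ft + 20/9 * (g+t)) * (1+t)) by (apply Rmult_le_compat_r; lra).
        assert (0 <= ft * (g + t)) by nra. nra. }
      assert (0 <= (1 + t) * (20/9) * (g + t)) by nra.
      assert (C * (fg * (1 + t) + ft * (1 - g)) <= C * ((1 + t) * (20/9) * (g + t))) by
        (apply Rmult_le_compat_l; auto).
      assert (C * ((1 + t) * (20/9) * (g + t)) <= t^2 * ((1 + t) * (20/9) * (g + t))) by
        (apply Rmult_le_compat_r; auto).
      assert (t^2 * (1+t) * (20/9) <= 1) by nra.
      assert (0 <= g + t) by lra. nra.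
    - assert (Hg2 : 1/2 <= g) by lra. specialize (H2 Hg2).
      assert (P : fg * (1 + t) + ft * (1 - g) <= 2 + 3 * t).
      { assert (fg * (1+t) <= 2 * (1+t)) by (apply Rmult_le_compat_r; lra).
        assert (ft * (1 - g) <= 2 * t * (1/2)) by (apply Rmult_le_compat; lra). lra. }
      assert (C * (fg * (1 + t) + ft * (1 - g)) <= C * (2 + 3 * t)) by
        (apply Rmult_le_compat_l; auto).
      assert (C * (2 + 3 * t) <= t^2 * (2 + 3 * t)) by (apply Rmult_le_compat_r; lra).
      assert (t^2 * (2 + 3*t) <= 1/2 + t) by nra. lra. }
  nra.
Qed.


Theorem mainTheorem5 (d : nat) (hd : (3 <= d)%nat) :
  forall g : R, - / (INR d - 1) <= g < 1 ->
    q d (- / (INR d - 1)) <= q d g.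
Proof.
  intros g [Hg1 Hg2].
  assert (HD : 3 <= INR d) by (apply le_INR in hd; simpl in hd; lra).
  assert (HK : INR (d * d - 1) = INR d * INR d - 1).
  { rewrite minus_INR, mult_INR. simpl; ring. nia. }
  set (K := INR (d * d - 1)) in *.
  set (s := K / 2).
  assert (Hs : 4 <= s) by (unfold s; nra).
  set (c := 2 / K * (Gamma ((K + 1) / 2) / Gamma (K / 2)) ^ 2).
  assert (Hc : 0 <= c <= 1).
  { assert (E1 : Gamma ((K + 1) / 2) = RInt_gen (fs (s + /2)) FA FB).
    { unfold s. replace ((K + 1) / 2) with (K / 2 + / 2) by field. reflexivity. }
    assert (E2 : Gamma (K / 2) = RInt_gen (fs s) FA FB) by reflexivity.
    pose proof (Gamma_ratio s ltac:(lra)) as HR.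
    unfold c. rewrite E1, E2. 
    set (r := RInt_gen (fs (s + / 2)) FA FB / RInt_gen (fs s) FA FB) in *.
    assert (0 <= r^2) by apply pow2_ge_0.
    assert (0 < K) by nra. unfold s in HR.
    split.
    - apply Rmult_le_pos; auto. left; apply Rdiv_lt_0_compat; lra.
    - replace (2 / K * r^2) with (r^2 / (K/2)) by (field; lra).
      apply Rmult_le_reg_r with (K/2). lra. field_simplify; lra. }
  set (c0 := K / 2 + 1).
  assert (Hc0 : 3 <= c0) by (unfold c0; nra).
  assert (EF : forall x, Fstar (d * d - 1) x = c * (x * H c0 (x^2))).
  { intros x. unfold Fstar, c. fold K. unfold H, hyp2F1, a. fold c0.
    assert (0 < K) by nra. set (r := Gamma ((K + 1) / 2) / Gamma (K / 2)). field. lra. }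
  set (t := / (INR d - 1)).
  assert (Ht : 0 < t <= 1/2).
  { unfold t. split. apply Rinv_0_lt_compat; lra.
    apply Rmult_le_reg_r with (INR d - 1). lra. rewrite Rinv_l; lra. }
  assert (Et : / (INR d - 1) ^ 2 = t^2) by (unfold t; field; lra).
  unfold q. rewrite !EF.
  replace (c * (- t * H c0 ((- t) ^ 2)) / (INR d - 1) ^ 2) with (c * t^2 * (- (t * H c0 (t^2))))
    by (unfold Rdiv; rewrite Et; replace ((-t)^2) with (t^2) by ring; ring).
  replace (c * (g * H c0 (g ^ 2)) / (INR d - 1) ^ 2) with (c * t^2 * (g * H c0 (g ^ 2)))
    by (unfold Rdiv; rewrite Et; ring).
  assert (Hg0 : -t <= g) by (unfold t; lra).
  apply final_ineq; auto.
  - assert (0 <= t^2 < 1) by nra. pose proof (H_bounds c0 Hc0 (t^2) H0). nra.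
  - intros Hg. assert (0 <= g^2 < 1) by nra. pose proof (H_bounds c0 Hc0 (g^2) H0). nra.
  - intros Hg. pose proof (f_lip c0 Hc0 g (-t)) as HL.
    replace ((-t)^2) with (t^2) in HL by ring.
    assert (Rabs g <= 1/2) by (apply Rabs_le; lra).
    assert (Rabs (-t) <= 1/2) by (apply Rabs_le; lra).
    specialize (HL H0 H1 Hg0). lra.
Qed.
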